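(* Let $n\ge 5$ and let $\sigma$ be a maximal simplex of $\Delta_n$ that covers all places. Then $N(v)\cap\sigma\neq\emptyset$ for every $v\in\sigma$.
   Context: $\mathbb{I}_n$ is the $n$-dimensional hypercube graph on vertex set $\{0,1\}^n$ (adjacent iff differing in exactly one coordinate), with Hamming distance $d(v,w)=\#\{i: v(i)\ne w(i)\}$, $v(i)$ the $i$-th coordinate. $\Delta_n=\mathcal{VR}(\mathbb{I}_n;3)$ is the simplicial complex whose simplices are the subsets $\sigma\subseteq\{0,1\}^n$ with $d(x,y)\le 3$ for all $x,y\in\sigma$. A simplex $\sigma$ covers all places if for each $i\in[n]=\{1,\dots,n\}$ there are $v,w\in\sigma$ with $v(i)=1$ and $w(i)=0$. $N(v)=\{v^i: i\in[n]\}$, where $v^i$ is $v$ with coordinate $i$ changed. *)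

(* Defs.v *)
From mathcomp Require Import all_boot.
Set Implicit Arguments. Unset Strict Implicit. Unset Printing Implicit Defensive.

(* Vertices of the n-cube I_n: functions [n] -> {0,1}, coordinates indexed by 'I_n
   (index i : 'I_n stands for place i+1). *)
Definition cube (n : nat) := {ffun 'I_n -> bool}.

Definition hdist n (v w : cube n) : nat := #|[set i : 'I_n | v i != w i]|.

(* simplices of Delta_n = VR(I_n; 3) : sets of vertices with pairwise distance <= 3 *)
Definition is_simplex n (s : {set cube n}) : Prop :=
  forall x y, x \in s -> y \in s -> hdist x y <= 3.

Definition is_maximal_simplex n (s : {set cube n}) : Prop :=
  is_simplex s /\ (forall t : {set cube n}, is_simplex t -> s \subset t -> t = s).

Definition covers_all_places n (s : {set cube n}) : Prop :=
  forall i : 'I_n, exists v, exists w, [/\ v \in s, w \in s, v i = true & w i = false].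

Definition flip n (v : cube n) (i : 'I_n) : cube n :=
  [ffun j => if j == i then ~~ v j else v j].

Definition nbhd n (v : cube n) : {set cube n} := [set flip v i | i : 'I_n].

(* Main.v *)
Require Import Defs.
From mathcomp Require Import all_boot.
From mathcomp Require Import zify.
Set Implicit Arguments. Unset Strict Implicit. Unset Printing Implicit Defensive.

Definition Dset n (v w : cube n) : {set 'I_n} := [set i | v i != w i].

Lemma card_pred_sum n (p : 'I_n -> bool) : #|[set i | p i]| = \sum_i p i.
Proof.
rewrite -sum1_card big_mkcond /=; apply: eq_bigr => i _; rewrite inE; by case: (p i).
Qed.

Lemma card_xor n (p q : 'I_n -> bool) :
  #|[set i | p i]| + #|[set i | q i]| =
  #|[set i | p i != q i]| + 2 * #|[set i | p i && q i]|.
Proof.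
rewrite !card_pred_sum -!big_split /= big_distrr /= -big_split /=.
apply: eq_bigr => i _; by case: (p i); case: (q i).
Qed.

Lemma hdist_sym n (x y : cube n) : hdist x y = hdist y x.
Proof. rewrite /hdist; apply: eq_card => i; by rewrite !inE eq_sym. Qed.

Lemma D_inter n (v w1 w2 : cube n) : hdist w1 w2 <= 3 ->
  #|Dset v w1| + #|Dset v w2| <= 3 + 2 * #|Dset v w1 :&: Dset v w2|.
Proof.
have e : Dset v w1 :&: Dset v w2 = [set i | (v i != w1 i) && (v i != w2 i)].
  by apply/setP => i; rewrite !inE.
have e2 : hdist w1 w2 = #|[set i | (v i != w1 i) != (v i != w2 i)]|.
  rewrite /hdist; apply: eq_card => i; rewrite !inE.
  by case: (v i); case: (w1 i); case: (w2 i).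
have := card_xor (fun i => v i != w1 i) (fun i => v i != w2 i).
rewrite /Dset e e2 /= => -> h; by rewrite leq_add2r.
Qed.

Theorem mainTheorem6 (n : nat) (s : {set cube n}) :
  5 <= n -> is_maximal_simplex s -> covers_all_places s ->
  forall v, v \in s -> nbhd v :&: s != set0.
Proof.
move=> n5 [simp maxs] cov v vs; apply/negP => /eqP H0.
have notin : forall i, flip v i \notin s.
  move=> i; apply/negP => fs.
  have : flip v i \in nbhd v :&: s.
    by rewrite inE fs andbT; apply/imsetP; exists i.
  by rewrite H0 inE.
have Dle3 : forall w, w \in s -> #|Dset v w| <= 3 := fun w ws => simp v w vs ws.
have H : forall w1 w2, w1 \in s -> w2 \in s ->
    #|Dset v w1| + #|Dset v w2| <= 3 + 2 * #|Dset v w1 :&: Dset v w2|.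
  by move=> w1 w2 w1s w2s; apply: D_inter; apply: simp.
have F3 : forall i, exists w, [/\ w \in s, #|Dset v w| = 3 & i \notin Dset v w].
  move=> i.
  have : ~~ [forall w in s, hdist (flip v i) w <= 3].
    apply/negP => /forall_inP Hall.
    have st : is_simplex (flip v i |: s).
      move=> x y; rewrite !inE => /orP[/eqP->|xs] /orP[/eqP->|ys].
      - rewrite /hdist (_ : [set j | _ != _] = set0) ?cards0 //.
        by apply/setP => j; rewrite !inE eqxx.
      - by apply: Hall.
      - by rewrite hdist_sym; apply: Hall.
      - by apply: simp.
    have e := maxs _ st (subsetUr _ _).
    by have := notin i; rewrite -e setU11.
  case/forall_inPn => w ws hw.
  have sub : [set j | flip v i j != w j] \subset i |: Dset v w.
    apply/subsetP => j; rewrite !inE ffunE; by case: (j == i).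
  have c1 := subset_leq_card sub; rewrite cardsU1 in c1.
  have c2 := Dle3 w ws.
  rewrite /hdist -ltnNge in hw.
  case: (boolP (i \in Dset v w)) => iD; rewrite iD /= in c1; have h3 := leq_trans hw c1.
    by rewrite add0n in h3; have := leq_trans h3 c2.
  exists w; split => //; apply/eqP; rewrite eqn_leq c2 /=.
  by rewrite add1n ltnS in h3.
have F4 : forall w k, w \in s -> k \in Dset v w -> exists2 t, t != k & t \in Dset v w.
  move=> w k ws kD.
  case: (boolP [exists t, (t != k) && (t \in Dset v w)]) => [/existsP[t /andP[]]|/existsPn Hn].
    by exists t.
  exfalso.
  have ew : w = flip v k.
    apply/ffunP => j; rewrite ffunE.
    case: eqP => [->|/eqP ne].
      by move: kD; rewrite inE; case: (v k); case: (w k).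
    by have := Hn j; rewrite ne /= inE negbK => /eqP ->.
  by move: (notin k); rewrite -ew ws.
have Cov : forall k, exists2 w, w \in s & k \in Dset v w.
  move=> k; case: (cov k) => a [b [a_s b_s ak bk]].
  case vk : (v k); [exists b | exists a]; by rewrite // inE vk ?ak ?bk.
have L1 : forall c b u w, c \in s -> b \in s -> #|Dset v b| = 3 ->
    u \in Dset v c -> w \in Dset v c -> u \notin Dset v b -> w \notin Dset v b -> u = w.
  move=> c b u w cs bs b3 uc wc ub wb; apply/eqP; apply/negPn/negP => neq.
  have sub : Dset v c :&: Dset v b \subset (Dset v c :\ u) :\ w.
    apply/subsetP => j; rewrite in_setI => /andP[jc jb]; rewrite !in_setD1 jc andbT.
    apply/andP; split; apply/eqP => e; subst j.
      by rewrite jb in wb.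
    by rewrite jb in ub.
  have c1 := subset_leq_card sub.
  have e1 := cardsD1 u (Dset v c); rewrite uc /= in e1.
  have e2 := cardsD1 w (Dset v c :\ u); rewrite in_setD1 wc eq_sym neq /= in e2.
  have := H c b cs bs; have := Dle3 c cs; rewrite b3 => h4 h5; move: c1 e1 e2 h4 h5; set a := #|Dset v c|; set a2 := #|Dset v c :&: Dset v b|; set a3 := #|Dset v c :\ u|; set a4 := #|Dset v c :\ u :\ w|; lia.
have n0 : 0 < n by lia.
pose k := Ordinal n0.
case: (Cov k) => c cs kc; case: (F4 c k cs kc) => t tk tc.
case: (F3 t) => bt [bts bt3 tbt].
have kbt : k \in Dset v bt.
  apply/negPn/negP => kn; have e := L1 c bt k t cs bts bt3 kc tc kn tbt.
  by rewrite e eqxx in tk.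
case: (F3 k) => bk [bks bk3 kbk].
have tbk : t \in Dset v bk.
  apply/negPn/negP => tn; have e := L1 c bk t k cs bks bk3 tc kc tn kbk.
  by rewrite e eqxx in tk.
have : #|Dset v bt :\ k| == 2.
  by have := cardsD1 k (Dset v bt); rewrite kbt bt3 add1n => -[<-].
case/cards2P => x [y [xy ebt]].
have inbt : forall e, e \in Dset v bt -> [\/ e = k, e = x | e = y].
  move=> e eb; case: (eqVneq e k) => [->|ne]; first by constructor 1.
  have : e \in Dset v bt :\ k by rewrite in_setD1 ne eb.
  rewrite ebt !inE => /orP[/eqP->|/eqP->]; by [constructor 2 | constructor 3].
have : x \in Dset v bt :\ k by rewrite ebt !inE eqxx.
rewrite in_setD1 => /andP[xk xbt].
have : y \in Dset v bt :\ k by rewrite ebt !inE eqxx orbT.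
rewrite in_setD1 => /andP[yk ybt].
have xbk : x \in Dset v bk.
  apply/negPn/negP => xn; have e := L1 bt bk k x bts bks bk3 kbt xbt kbk xn.
  by rewrite e eqxx in xk.
have ybk : y \in Dset v bk.
  apply/negPn/negP => yn; have e := L1 bt bk k y bts bks bk3 kbt ybt kbk yn.
  by rewrite e eqxx in yk.
have inbk : forall e, e \in Dset v bk -> [\/ e = t, e = x | e = y].
  move=> e eb; case: (boolP (e \in Dset v bt)) => ebt'.
    case: (inbt e ebt') => [ek|->|->]; [|by constructor 2|by constructor 3].
    by rewrite -ek eb in kbk.
  constructor 1; exact: (L1 bk bt e t bks bts bt3 eb tbk ebt' tbt).
case: (F3 x) => bx [bxs bx3 xbx].
have kbx : k \in Dset v bx.
  apply/negPn/negP => kn; have e := L1 bt bx x k bts bxs bx3 xbt kbt xbx kn.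
  by rewrite e eqxx in xk.
have tbx : t \in Dset v bx.
  apply/negPn/negP => tn; have e := L1 bk bx x t bks bxs bx3 xbk tbk xbx tn.
  by rewrite -e xbt in tbt.
have ybx : y \in Dset v bx.
  apply/negPn/negP => yn; have e := L1 bt bx x y bts bxs bx3 xbt ybt xbx yn.
  by rewrite e eqxx in xy.
case: (F3 y) => by_ [bys by3 yby].
have kby : k \in Dset v by_.
  apply/negPn/negP => kn; have e := L1 bt by_ y k bts bys by3 ybt kbt yby kn.
  by rewrite e eqxx in yk.
have tby : t \in Dset v by_.
  apply/negPn/negP => tn; have e := L1 bk by_ y t bks bys by3 ybk tbk yby tn.
  by rewrite -e ybt in tbt.
have xby : x \in Dset v by_.
  apply/negPn/negP => xn; have e := L1 bt by_ y x bts bys by3 ybt xbt yby xn.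
  by rewrite e eqxx in xy.
have inbx : forall e, e \in Dset v bx -> [\/ e = t, e = k | e = y].
  move=> e eb; case: (boolP (e \in Dset v bt)) => ebt'.
    case: (inbt e ebt') => [->|ex|->]; [by constructor 2| |by constructor 3].
    by rewrite -ex eb in xbx.
  constructor 1; exact: (L1 bx bt e t bxs bts bt3 eb tbx ebt' tbt).
have inby : forall e, e \in Dset v by_ -> [\/ e = t, e = k | e = x].
  move=> e eb; case: (boolP (e \in Dset v bt)) => ebt'.
    case: (inbt e ebt') => [->|->|ey]; [by constructor 2|by constructor 3|].
    by rewrite -ey eb in yby.
  constructor 1; exact: (L1 by_ bt e t bys bts bt3 eb tby ebt' tbt).
have : ~~ [forall z, z \in [:: k; t; x; y]].
  apply/negP => /forallP hall.
  have : #|'I_n| <= #|[:: k; t; x; y]|.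
    by apply: subset_leq_card; apply/subsetP => z _; exact: hall z.
  by have := card_size [:: k; t; x; y]; rewrite card_ord => h1 h2; move: (leq_trans n5 (leq_trans h2 h1)).
case/forallPn => z zn; rewrite !inE in zn.
have zk : z != k by apply: contra zn => ->.
have zt : z != t by apply: contra zn => ->; rewrite orbT.
have zx : z != x by apply: contra zn => ->; rewrite !orbT.
have zy : z != y by apply: contra zn => ->; rewrite !orbT.
case: (Cov z) => c' c's zc'; case: (F4 c' z c's zc') => t' t'z t'c'.
have zbk : z \notin Dset v bk.
  by apply/negP => /inbk [] /eqP; apply/negP.
have zbt : z \notin Dset v bt.
  by apply/negP => /inbt [] /eqP; apply/negP.
have zbx : z \notin Dset v bx.
  by apply/negP => /inbx [] /eqP; apply/negP.
have zby : z \notin Dset v by_.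
  by apply/negP => /inby [] /eqP; apply/negP.
have memb : forall b, b \in s -> #|Dset v b| = 3 -> z \notin Dset v b -> t' \in Dset v b.
  move=> b bs b3 zb; apply/negPn/negP => tn.
  have e := L1 c' b z t' c's bs b3 zc' t'c' zb tn.
  by rewrite e eqxx in t'z.
have t'bk := memb bk bks bk3 zbk.
have t'bt := memb bt bts bt3 zbt.
have t'bx := memb bx bxs bx3 zbx.
have t'by := memb by_ bys by3 zby.
case: (inbk t' t'bk) => e; subst t'.
- by rewrite t'bt in tbt.
- by rewrite t'bx in xbx.
- by rewrite t'by in yby.
Qed.
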